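(* Let $A^{(n)}_k$ be Knuth's Faulhaber coefficients, defined by $$\sum_{n\ge1}\sum_{k=0}^{n-1}\frac{x^{2n}}{(2n)!}A^{(n)}_k y^{k}=\left(\frac{x\sqrt y}{2}\right)\frac{\cosh\!\left(\tfrac12 x\sqrt{y+4}\right)-\cosh\!\left(\tfrac12 x\sqrt y\right)}{\sinh\!\left(\tfrac12 x\sqrt y\right)},$$ and for $n\ge k\ge2$ let $b(n,k)=(-1)^{n-k}A^{(n)}_{n-k}\frac{(k!)^2}{(2k+1)!}$. Then for all $n>2$ and $2\le k\le n-1$, $$b(n,k)>2\,b(n,k+1)\quad\text{and}\quad b(n,k)>\sum_{l=k+1}^{n}b(n,l),$$ and $b(n,k)>0$ for all $n\ge k\ge2$. *)

(* Defs.v *)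
From mathcomp Require Import all_boot all_order all_algebra.
Set Implicit Arguments. Unset Strict Implicit. Unset Printing Implicit Defensive.
Import Order.TTheory GRing.Theory Num.Theory.
Local Open Scope ring_scope.

(* With u = x sqrt y / 2 and v = x sqrt(y+4) / 2 we have u^2 = x^2 y/4,
   v^2 = x^2 (y+4)/4, so
     cosh v - cosh u = sum_j x^(2j) ((y+4)^j - y^j) / (4^j (2j)!),
     u / sinh u      = sum_i c_i x^(2i) y^i / 4^i,
   where (c_i) is the reciprocal of the power series
     sinh(u)/u = sum_j u^(2j)/(2j+1)!  (in the variable u^2). *)

(* first m+1 coefficients of the reciprocal of sum_j t^j/(2j+1)! *)
Fixpoint sinhc_inv_seq (m : nat) : seq rat :=
  match m with
  | 0 => [:: 1]
  | m'.+1 =>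
      let s := sinhc_inv_seq m' in
      rcons s (- \sum_(i < m'.+1) s`_i / ((2 * (m'.+1 - i)).+1)`!%:R)
  end.

Definition sinhc_inv (m : nat) : rat := (sinhc_inv_seq m)`_m.

(* coefficient of x^(2n) in the generating function, as a polynomial in y *)
Definition faulhaber_gf_coef (n : nat) : {poly rat} :=
  \sum_(i < n.+1)
     ((sinhc_inv i / 4%:R ^+ i) *: 'X^i) *
     ((('X + 4%:R%:P) ^+ (n - i) - 'X ^+ (n - i))
        * ((4%:R ^+ (n - i) * (2 * (n - i))`!%:R)^-1)%:P).

Definition faulhaberA (n k : nat) : rat := (2 * n)`!%:R * (faulhaber_gf_coef n)`_k.

Definition bnk (n k : nat) : rat :=
  (-1) ^+ (n - k) * faulhaberA n (n - k) * (k`! ^ 2)%:R / ((2 * k).+1)`!%:R.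

(* Main.v *)
Require Import Defs.
From mathcomp Require Import all_boot all_order all_algebra.
From mathcomp Require Import ring lra zify.
Import Order.TTheory GRing.Theory Num.Theory.
Local Open Scope ring_scope.

Lemma size_sis m : size (sinhc_inv_seq m) = m.+1.
Proof. by elim: m => [|m IH] //=; rewrite size_rcons IH. Qed.

Lemma sis_prefix m i : (i <= m)%N -> (sinhc_inv_seq m)`_i = sinhc_inv i.
Proof.
move=> him; rewrite /sinhc_inv.
have ->: m = (i + (m - i))%N by rewrite subnKC.
elim: (m - i)%N => [|d IH]; first by rewrite addn0.
by rewrite addnS /= nth_rcons size_sis ltnS leq_addr IH.
Qed.

Lemma c0 : sinhc_inv 0 = 1. Proof. by []. Qed.

Lemma crec m : \sum_(i < m.+2) sinhc_inv i / ((2*(m.+1 - i)).+1)`!%:R = 0.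
Proof.
rewrite big_ord_recr /= subnn muln0 /= divr1.
rewrite {2}/sinhc_inv /= nth_rcons size_sis ltnn eqxx.
set s := sinhc_inv_seq m.
have E : \sum_(i < m.+1) sinhc_inv i / ((2*(m.+1 - i)).+1)`!%:R = \sum_(i < m.+1) s`_i / ((2*(m.+1 - i)).+1)`!%:R.
  by apply: eq_bigr => i _; rewrite /s sis_prefix // -ltnS.
by rewrite E addrN.
Qed.

Lemma fact_neq0 n : (n`!)%:R != 0 :> rat.
Proof. by rewrite pnatr_eq0 -lt0n fact_gt0. Qed.

Definition S n k : rat :=
  \sum_(i < n.+1) sinhc_inv i * ('C(n - i, k))%:R / ((2 * (n - i))`!)%:R.

Definition beta n k : rat := (-1) ^+ (n - k) * S n k.

Lemma S_1 n : (2 <= n)%N -> S n 1 = 0.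
Proof.
case: n => [|[|m]] // _.
rewrite /S big_ord_recr /= subnn bin0n /= mulr0 mul0r addr0.
rewrite (eq_bigr (fun i : 'I_m.+2 => 2%:R^-1 * (sinhc_inv i / ((2*(m.+1 - i)).+1)`!%:R))).
  by rewrite -mulr_sumr crec mulr0.
move=> i _.
have hi := ltn_ord i.
have ->: (m.+2 - i = (m.+1 - i).+1)%N by rewrite subSn.
rewrite bin1; set t := (m.+1 - i)%N.
have ->: (2 * t.+1 = (2 * t).+1.+1)%N by rewrite mulnS.
rewrite factS natrM.
have h := fact_neq0 (2 * t).+1.
have e : ((2*t).+2)%:R = 2 * (t.+1)%:R :> rat by rewrite -natrM mulnS.
rewrite e. field. by rewrite h /= addrC natr1 pnatr_eq0.
Qed.

Lemma S_small n k : (n < k)%N -> S n k = 0.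
Proof.
move=> h; rewrite /S big1 // => i _.
rewrite bin_small ?mulr0 ?mul0r //.
exact: leq_ltn_trans (leq_subr _ _) h.
Qed.

Lemma S_diag n : S n n = ((2 * n)`!%:R)^-1.
Proof.
rewrite /S big_ord_recl /= subn0 binn c0 mul1r big1 ?addr0 ?div1r //.
move=> i _; rewrite bin_small ?mulr0 ?mul0r //.
by rewrite /bump /= add1n subnSK ?ltn_ord // leq_subr.
Qed.

Lemma bin_rec N k :
  (4 * k.+1 * k.+2 * 'C(N.+1, k.+2) + (4 * k + 2) * k.+1 * 'C(N.+1, k.+1)
   = (2 * N).+2 * (2 * N).+1 * 'C(N, k))%N.
Proof.
have h1 : (k.+2 * 'C(N.+1, k.+2) = N.+1 * 'C(N, k.+1))%N by rewrite -mul_bin_diag.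
have h2 : (k.+1 * 'C(N, k.+1) = (N - k) * 'C(N, k))%N by rewrite mul_bin_left.
have h3 : (k.+1 * 'C(N.+1, k.+1) = N.+1 * 'C(N, k))%N by rewrite -mul_bin_diag.
have -> : (4 * k.+1 * k.+2 * 'C(N.+1, k.+2) = 4 * N.+1 * ((N - k) * 'C(N, k)))%N.
  by rewrite -h2 -!mulnA h1; ring.
have -> : ((4 * k + 2) * k.+1 * 'C(N.+1, k.+1) = (4 * k + 2) * (N.+1 * 'C(N, k)))%N.
  by rewrite -h3 mulnA.
case: (leqP k N) => hk.
  have -> : N = (k + (N - k))%N by rewrite subnKC.
  rewrite addKn; ring.
by rewrite bin_small // !muln0.
Qed.

Lemma S_ext n k : S n.+1 k.+1 =
  \sum_(i < n.+1) sinhc_inv i * 'C(n.+1 - i, k.+1)%:R / (2 * (n.+1 - i))`!%:R.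
Proof.
rewrite /S big_ord_recr subnn (@bin_small 0) // mulr0 mul0r.
by rewrite [X in _ + X = _]/= addr0.
Qed.

Lemma aux_rec (c C0 C1 C2 F P1 P2 A B : rat) : F != 0 -> P1 != 0 -> P2 != 0 ->
  A * C2 + B * C1 = P2 * P1 * C0 ->
  c * C0 / F = A * (c * C2 / (P2 * (P1 * F))) + B * (c * C1 / (P2 * (P1 * F))).
Proof.
move=> h1 h2 h3 E.
have -> : c * C0 / F = c * (P2 * P1 * C0) / (P2 * (P1 * F)) by field; rewrite h1 h2 h3.
rewrite -E. field. by rewrite h1 h2 h3.
Qed.

Lemma S_rec n k : S n k =
  (4 * k.+1 * k.+2)%:R * S n.+1 k.+2 + ((4 * k + 2) * k.+1)%:R * S n.+1 k.+1.
Proof.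
rewrite !S_ext /S !mulr_sumr -big_split.
apply: eq_bigr => i _.
have hi : (i <= n)%N by rewrite -ltnS.
rewrite subSn //; set N := (n - i)%N.
set c := sinhc_inv i.
have E : (4 * k.+1 * k.+2)%:R * 'C(N.+1, k.+2)%:R +
    ((4 * k + 2) * k.+1)%:R * 'C(N.+1, k.+1)%:R =
    ((2 * N).+2)%:R * ((2 * N).+1)%:R * 'C(N, k)%:R :> rat.
  by rewrite -!natrM -natrD bin_rec.
have -> : (2 * N.+1 = (2 * N).+2)%N by rewrite mulnS.
rewrite !factS !natrM.
apply: aux_rec; rewrite ?fact_neq0 ?pnatr_eq0 //.
by rewrite -E !natrM.
Qed.

Lemma coef_XaddC_exp (a : rat) j t : (('X + a%:P) ^+ j)`_t = a ^+ (j - t) * 'C(j, t)%:R.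
Proof.
elim: j t => [|j IH] t.
  by rewrite expr0 coef1 bin0n; case: t => //=; rewrite mulr1.
rewrite exprSr mulrDr coefD coefMX coefMC.
case: t => [|t] /=.
  by rewrite IH !bin0 !subn0 mulr1 add0r exprSr mulr1.
rewrite !IH binS natrD mulrDr addrC; congr (_ + _).
case: (ltnP t j) => htj.
  by rewrite subSS mulrAC -exprSr subnSK.
by rewrite !bin_small ?mulr0 ?mul0r // ltnS.
Qed.

Lemma gf_coef n k : (0 < k)%N -> (k <= n)%N ->
  (faulhaber_gf_coef n)`_(n - k) = 4%:R ^+ k / 4%:R ^+ n * S n k.
Proof.
move=> k0 kn.
rewrite /faulhaber_gf_coef coef_sum /S mulr_sumr; apply: eq_bigr => i _.
have hi := ltn_ord i.
rewrite -scalerAl coefZ coefXnM.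
case: ltnP => hik.
  rewrite mulr0 bin_small; first by rewrite !(mul0r, mulr0).
  lia.
rewrite coefMC coefB coefXn coef_XaddC_exp.
have -> : (n - k - i == n - i)%N = false by apply/negbTE; lia.
have -> : (n - k - i = (n - i) - k)%N by lia.
have -> : ((n - i) - ((n - i) - k) = k)%N by lia.
rewrite bin_sub; last by lia.
rewrite subr0.
have -> : (4%:R : rat) ^+ n = 4%:R ^+ i * 4%:R ^+ (n - i).
  by rewrite -exprD subnKC //; lia.
have h4 : forall m, (4%:R : rat) ^+ m != 0 by move=> m; rewrite expf_neq0 // pnatr_eq0.
have hf := fact_neq0 (2 * (n - i)).
field. by rewrite hf !h4.
Qed.

Definition w n k : rat :=
  (2 * n)`!%:R * (4%:R ^+ k / 4%:R ^+ n) * (k`! ^ 2)%:R / ((2 * k).+1)`!%:R.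

Lemma w_gt0 n k : 0 < w n k.
Proof.
rewrite /w !(divr_gt0, mulr_gt0) ?exprn_gt0 ?ltr0n ?fact_gt0 ?expn_gt0 ?fact_gt0 //.
Qed.

Lemma aux_bnk (s F a b S K D : rat) :
  s * (F * (a / b * S)) * K / D = F * (a / b) * K / D * (s * S).
Proof. ring. Qed.

Lemma bnkE n k : (0 < k)%N -> (k <= n)%N -> bnk n k = w n k * beta n k.
Proof.
move=> k0 kn; rewrite /bnk /faulhaberA gf_coef // /w /beta.
exact: aux_bnk.
Qed.

Lemma beta_diag n : beta n n = ((2 * n)`!%:R)^-1.
Proof. by rewrite /beta subnn expr0 mul1r S_diag. Qed.

Lemma beta_small n : beta n n.+1 = 0.
Proof. by rewrite /beta S_small ?mulr0. Qed.

Lemma beta_1 n : (2 <= n)%N -> beta n 1 = 0.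
Proof. by move=> h; rewrite /beta S_1 ?mulr0. Qed.

Lemma beta_rec n k : (k <= n)%N ->
  ((4 * k + 2) * k.+1)%:R * beta n.+1 k.+1 = beta n k + (4 * k.+1 * k.+2)%:R * beta n.+1 k.+2.
Proof.
move=> kn.
have E := S_rec n k.
rewrite /beta subSS E.
have -> : (-1) ^+ (n.+1 - k.+2) * S n.+1 k.+2 = - ((-1) ^+ (n - k) * S n.+1 k.+2).
  case: (ltnP k n) => h.
    rewrite subSS.
    have -> : (n - k = (n - k.+1).+1)%N by lia.
    rewrite exprS; ring.
  have -> : k = n by apply/eqP; rewrite eqn_leq kn h.
  by rewrite S_small // !mulr0 oppr0.
ring.
Qed.

Lemma key (K x y z p q : rat) : 2 <= K -> 0 < p -> 4*(K+1) * q < (2*K+3) * p ->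
  0 < y -> 4*(K+3) * z < (2*K+7) * y ->
  (4*K+2)*(K+1) * x = p + 4*(K+1)*(K+2) * y ->
  (4*K+6)*(K+2) * y = q + 4*(K+2)*(K+3) * z ->
  0 < x /\ 4*(K+2) * y < (2*K+5) * x.
Proof.
move=> hK hp hpq hy hyz E1 E2.
have hq : (K+2)*(2*K-1) * y < q by nra.
have hp2 : 4*(K+1)*(K+2)*(2*K-1) * y < (2*K+3) * p by nra.
have hp3 : 4*(K+1)*(K+2)*(2*K-3) * y < (2*K+5) * p by nra.
have hx : 0 < (4*K+2)*(K+1) * x by nra.
split; first by nra.
nra.
Qed.

Lemma test_cast k : ((4 * k + 2) * k.+1)%:R = (4 * k%:R + 2) * (k%:R + 1) :> rat.
Proof. ring. Qed.

Lemma inv_all N j : (2 <= j)%N -> (j <= N)%N ->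
  0 < beta N j /\ (4 * j.+1)%:R * beta N j.+1 < (2 * j + 3)%:R * beta N j.
Proof.
elim: N j => [|n IHn] j hj hjN; first by lia.
suff P : forall d j, (2 <= j)%N -> (j + d = n.+1)%N ->
  0 < beta n.+1 j /\ (4 * j.+1)%:R * beta n.+1 j.+1 < (2 * j + 3)%:R * beta n.+1 j.
  by apply: (P (n.+1 - j)%N) => //; lia.
elim => [|d IHd] {hj hjN} j hj hjd.
  have -> : j = n.+1 by lia.
  rewrite beta_small mulr0 beta_diag.
  have h : 0 < ((2 * n.+1)`!%:R : rat)^-1 by rewrite invr_gt0 ltr0n fact_gt0.
  split => //; rewrite mulr_gt0 //.
case: j hj hjd => [|k] // hk hkd.
have [y0 yr] := IHd k.+2 ltac:(lia) ltac:(lia).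
have kn : (k < n)%N by lia.
have R1 := beta_rec _ _ (ltnW kn).
have R2 := beta_rec _ _ kn.
case: (ltnP k 2) => hk2.
  have ek : k = 1%N by lia.
  subst k.
  rewrite beta_1 in R1; last by lia.
  move: R1 y0; rewrite add0r /= => R1 y0.
  split; nra.
have [p0 pr] := IHn k ltac:(lia) ltac:(lia).
have e1 : ((4 * k + 2) * k.+1)%:R = (4 * k%:R + 2) * (k%:R + 1) :> rat by ring.
have e2 : (4 * k.+1 * k.+2)%:R = 4 * (k%:R + 1) * (k%:R + 2) :> rat by ring.
have e3 : ((4 * k.+1 + 2) * k.+2)%:R = (4 * k%:R + 6) * (k%:R + 2) :> rat by ring.
have e4 : (4 * k.+2 * k.+3)%:R = 4 * (k%:R + 2) * (k%:R + 3) :> rat by ring.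
have e5 : (4 * k.+1)%:R = 4 * (k%:R + 1) :> rat by ring.
have e6 : (2 * k + 3)%:R = 2 * k%:R + 3 :> rat by ring.
have e7 : (4 * k.+3)%:R = 4 * (k%:R + 3) :> rat by ring.
have e8 : (2 * k.+2 + 3)%:R = 2 * k%:R + 7 :> rat by ring.
have e9 : (4 * k.+2)%:R = 4 * (k%:R + 2) :> rat by ring.
have e10 : (2 * k.+1 + 3)%:R = 2 * k%:R + 5 :> rat by ring.
rewrite e9 e10.
rewrite e1 e2 in R1. rewrite e3 e4 in R2. rewrite e5 e6 in pr. rewrite e7 e8 in yr.
apply: (key _ _ _ _ _ _ _ p0 pr y0 yr R1 R2).
by rewrite (ler_nat _ 2 k).
Qed.

Lemma tail_sum (f : nat -> rat) n k : (k < n)%N -> 0 < f n ->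
  (forall l, (k <= l)%N -> (l < n)%N -> 2%:R * f l.+1 < f l) ->
  \sum_(k.+1 <= l < n.+1) f l < f k.
Proof.
move=> kn fn hr.
suff P : forall d k, (k + d.+1 = n)%N -> (forall l, (k <= l)%N -> (l < n)%N -> 2%:R * f l.+1 < f l) ->
  \sum_(k.+1 <= l < n.+1) f l < f k.
  by apply: (P (n - k.+1)%N) => //; lia.
elim => [|d IH] {hr kn} j hj hr.
  have ej : n = j.+1 by lia.
  rewrite ej in fn hr *; rewrite big_nat1.
  have := hr j (leqnn j) (ltnSn j); lra.
rewrite big_ltn; last by lia.
have h1 := IH j.+1 ltac:(lia) (fun l hl hl2 => hr l ltac:(lia) hl2).
have h2 := hr j (leqnn j) ltac:(lia).
lra.
Qed.

Lemma b_pos n k : (2 <= k)%N -> (k <= n)%N -> 0 < bnk n k.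
Proof.
move=> hk hkn; rewrite bnkE //; last by lia.
by rewrite mulr_gt0 ?w_gt0 // (inv_all _ _ hk hkn).1.
Qed.

Lemma w_succ n k : w n k.+1 = w n k * (2 * k.+1)%:R / (2 * k + 3)%:R.
Proof.
rewrite /w.
have -> : ((2 * k.+1).+1 = ((2 * k).+1).+2)%N by rewrite mulnS.
rewrite !factS exprS !natrM.
have h1 := fact_neq0 ((2 * k).+1).
have h2 : (4%:R : rat) ^+ n != 0 by rewrite expf_neq0 // pnatr_eq0.
have h3 : ((2 * k).+3)%:R != 0 :> rat by rewrite pnatr_eq0.
have h4 : ((2 * k).+2)%:R != 0 :> rat by rewrite pnatr_eq0.
have e : (2 * k + 3)%:R = ((2 * k).+3)%:R :> rat by rewrite addn3.
rewrite e.
have P : forall c : rat, 0 < c -> c + 2 * k%:R != 0.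
  move=> c hc; apply/eqP => E0; have : 0 <= k%:R :> rat := ler0n _ _; lra.
field; rewrite ?h1 ?h2 ?h3 ?h4 ?P ?fact_neq0 //.
Qed.

Lemma b_ratio n k : (2 <= k)%N -> (k < n)%N -> 2%:R * bnk n k.+1 < bnk n k.
Proof.
move=> hk hkn.
rewrite !bnkE //; try lia.
have [_ r] := inv_all _ _ hk (ltnW hkn).
rewrite w_succ.
have W := w_gt0 n k.
have B : 0 < (2 * k + 3)%:R :> rat by rewrite ltr0n addn3.
have e : (4 * k.+1)%:R = 2 * (2 * k.+1)%:R :> rat by ring.
rewrite e in r.
have -> : 2%:R * (w n k * (2 * k.+1)%:R / (2 * k + 3)%:R * beta n k.+1) =
  w n k * ((2 * (2 * k.+1)%:R * beta n k.+1) / (2 * k + 3)%:R) by ring.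
rewrite ltr_pM2l // ltr_pdivrMr // (mulrC (beta n k)); exact: r.
Qed.

Theorem mainTheorem7 :
  (forall n k : nat, (2 < n)%N -> (2 <= k <= n.-1)%N ->
     2%:R * bnk n k.+1 < bnk n k /\
     \sum_(k.+1 <= l < n.+1) bnk n l < bnk n k) /\
  (forall n k : nat, (2 <= k <= n)%N -> 0 < bnk n k).
Proof.
split; last by move=> n k /andP[hk hkn]; exact: b_pos.
move=> n k hn /andP[hk hkn].
have kn : (k < n)%N by lia.
split; first exact: b_ratio.
apply: tail_sum => //; first by apply: b_pos; lia.
move=> l hl hln; apply: b_ratio => //; lia.
Qed.
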